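(* Let $P,Q$ be partial semigroups and $f:P\to Q$ a partial homomorphism. If $Q$ is IP-regular and the subset $f^{-1}[E(Q)]$ of $P$ is IP-regular, then $P$ is IP-regular.
   Context: A partial semigroup is a set with a partially defined multiplication such that $(ab)c=a(bc)$ whenever both sides are defined; any subset inherits a partial semigroup structure by restricting the operation. $E(P)$ is the set of idempotents ($aa$ defined and equal to $a$). A partial homomorphism $f:P\to Q$ is a map such that whenever $ab$ is defined in $P$, $f(a)f(b)$ is defined in $Q$ and $f(ab)=f(a)f(b)$. For a sequence $\vec{x}$ all of whose finite ordered products $\prod_{i\in a}x_i$ ($a$ finite nonempty subset of $\omega$, increasing order) are defined, $\mathrm{FP}(\vec{x})$ is the set of these products and $\mathrm{FP}_1(\vec{x})=\mathrm{FP}((x_{n+1})_n)$; an IP-set is a set containing such an $\mathrm{FP}(\vec{x})$. $P$ is strongly IP-regular if for every such sequence $\vec{x}$ in $P$, $x_0\mathrm{FP}_1(\vec{x})$ is not an IP-set; $P$ is IP-regular if $P\setminus E(P)$ is a union of finitely many strongly IP-regular subsets. *)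

(* Defs.v *)
From mathcomp Require Import all_boot.
Set Implicit Arguments. Unset Strict Implicit. Unset Printing Implicit Defensive.

Section PSG.
Variable T : Type.
(* A partial binary operation: [mul a b = Some c] means "ab is defined and equals c". *)
Variable mul : T -> T -> option T.

Definition psg_assoc : Prop :=
  forall a b c ab bc abc abc',
    mul a b = Some ab -> mul ab c = Some abc ->
    mul b c = Some bc -> mul a bc = Some abc' -> abc = abc'.

Definition opD (D : T -> Prop) (a b c : T) : Prop :=
  D a /\ D b /\ D c /\ mul a b = Some c.

Definition idem (D : T -> Prop) (a : T) : Prop := opD D a a a.

Fixpoint prod_from (D : T -> Prop) (x : nat -> T) (acc : T) (s : seq nat) (z : T)
  : Prop :=
  match s with
  | [::] => acc = z
  | j :: s' => exists c, opD D acc (x j) c /\ prod_from D x c s' z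
  end.

(* [prodD D x s z] : s is the increasing enumeration of a finite nonempty
   subset a of omega, and the ordered product prod_{i in a} x_i is defined
   in D and equals z. *)
Definition prodD (D : T -> Prop) (x : nat -> T) (s : seq nat) (z : T) : Prop :=
  match s with
  | [::] => False
  | i :: s' => D (x i) /\ prod_from D x (x i) s' z
  end.

Definition fin_index (s : seq nat) : Prop := sorted ltn s /\ s <> [::].

Definition FP_defined (D : T -> Prop) (x : nat -> T) : Prop :=
  forall s, fin_index s -> exists z, prodD D x s z.

Definition FP (D : T -> Prop) (x : nat -> T) (z : T) : Prop :=
  exists s, fin_index s /\ prodD D x s z.

Definition FP1 (D : T -> Prop) (x : nat -> T) : T -> Prop :=
  FP D (fun n => x n.+1).

Definition x0FP1 (D : T -> Prop) (x : nat -> T) (z : T) : Prop :=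
  exists y, FP1 D x y /\ opD D (x 0) y z.

Definition IPset (D : T -> Prop) (A : T -> Prop) : Prop :=
  exists y, FP_defined D y /\ (forall z, FP D y z -> A z).

Definition strongly_IP_regular (D : T -> Prop) : Prop :=
  forall x, FP_defined D x -> ~ IPset D (x0FP1 D x).

Definition IP_regular (D : T -> Prop) : Prop :=
  exists (n : nat) (S : nat -> T -> Prop),
    (forall i, i < n -> strongly_IP_regular (S i)) /\
    (forall a, (D a /\ ~ idem D a) <-> (exists2 i, i < n & S i a)).

End PSG.

Definition partial_hom (P Q : Type) (mulP : P -> P -> option P)
  (mulQ : Q -> Q -> option Q) (f : P -> Q) : Prop :=
  forall a b c, mulP a b = Some c -> mulQ (f a) (f b) = Some (f c).

Definition whole (T : Type) : T -> Prop := fun _ => True.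

(* Main.v *)
Require Import Defs.
From mathcomp Require Import all_boot.
From Stdlib Require Import Classical.
Set Implicit Arguments.
Unset Strict Implicit.

Section Aux.
Variables (P Q : Type) (mulP : P -> P -> option P) (mulQ : Q -> Q -> option Q)
  (f : P -> Q) (Tj : Q -> Prop).
Hypothesis hf : partial_hom mulP mulQ f.
Let DP := fun a => Tj (f a).

Lemma opD_map a b c : opD mulP DP a b c -> opD mulQ Tj (f a) (f b) (f c).
Proof. by move=> [h1 [h2 [h3 h4]]]; do 3 (split => //); apply: hf. Qed.

Lemma prod_from_map x s : forall acc z, prod_from mulP DP x acc s z ->
  prod_from mulQ Tj (fun n => f (x n)) (f acc) s (f z).
Proof.
elim: s => [|j s IH] acc z /=; first by move=> ->.
move=> [c [Hc Hp]]; exists (f c); split; [exact: opD_map | exact: IH].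
Qed.

Lemma prodD_map x s z : prodD mulP DP x s z -> prodD mulQ Tj (fun n => f (x n)) s (f z).
Proof. case: s => [|i s] //= [H1 H2]; split => //; exact: prod_from_map. Qed.

Lemma prod_from_det (D : Q -> Prop) x s : forall acc z z',
  prod_from mulQ D x acc s z -> prod_from mulQ D x acc s z' -> z = z'.
Proof.
elim: s => [|j s IH] acc z z' /=; first by move=> <- <-.
move=> [c [[_ [_ [_ Hc]]] Hp]] [c' [[_ [_ [_ Hc']]] Hp']].
rewrite Hc in Hc'; case: Hc' => Ec; subst c'; exact: IH Hp Hp'.
Qed.

Lemma prodD_det (D : Q -> Prop) x s z z' :
  prodD mulQ D x s z -> prodD mulQ D x s z' -> z = z'.
Proof. case: s => [|i s] //= [_ H1] [_ H2]; exact: prod_from_det H1 H2. Qed.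

Lemma FPdef_map x : FP_defined mulP DP x -> FP_defined mulQ Tj (fun n => f (x n)).
Proof. move=> H s hs; case: (H s hs) => z hz; exists (f z); exact: prodD_map. Qed.

Lemma preim_sIPr : strongly_IP_regular mulQ Tj -> strongly_IP_regular mulP DP.
Proof.
move=> HT x Hx [y [Hy Hsub]].
apply: (HT (fun n => f (x n))); first exact: FPdef_map.
exists (fun n => f (y n)); split; first exact: FPdef_map.
move=> z' [s [hs hz']].
case: (Hy s hs) => z hz.
have -> := prodD_det hz' (prodD_map hz).
have [w [[s' [hs' hw]] hop]] := Hsub z (ex_intro _ s (conj hs hz)).
exists (f w); split; last exact: opD_map.
exists s'; split => //; exact: (prodD_map hw).
Qed.
End Aux.

Theorem mainTheorem5 (P Q : Type) (mulP : P -> P -> option P)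
  (mulQ : Q -> Q -> option Q) (f : P -> Q) :
  psg_assoc mulP -> psg_assoc mulQ ->
  partial_hom mulP mulQ f ->
  IP_regular mulQ (@whole Q) ->
  IP_regular mulP (fun a => idem mulQ (@whole Q) (f a)) ->
  IP_regular mulP (@whole P).
Proof.
move=> _ _ hf [m [T [HT HTe]]] [n [S [HS HSe]]].
exists (n + m), (fun k => if k < n then S k else (fun a => T (k - n) (f a))).
split.
  move=> k hk; case: ifP => hkn; first exact: HS.
  apply: (preim_sIPr hf); apply: HT.
  by rewrite ltn_subLR // leqNgt hkn.
move=> a; split.
  move=> [_ Hna].
  case: (Classical_Prop.classic (idem mulQ (@whole Q) (f a))) => Hi.
    have : (idem mulQ (whole (T:=Q)) (f a) /\
            ~ idem mulP (fun a => idem mulQ (whole (T:=Q)) (f a)) a).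
      split => // [[_ [_ [_ H]]]]; apply: Hna; do 3 (split => //).
    move/HSe => [i hi Hs]; exists i; first exact: ltn_addr.
    by rewrite hi.
  have : whole (f a) /\ ~ idem mulQ (whole (T:=Q)) (f a) by [].
  move/HTe => [j hj Ht]; exists (n + j); first by rewrite ltn_add2l.
  by rewrite ltnNge leq_addr /= addKn.
move=> [k hk]; case: ifP => hkn Hk.
  have [Hi Hn] : (idem mulQ (whole (T:=Q)) (f a) /\
            ~ idem mulP (fun a => idem mulQ (whole (T:=Q)) (f a)) a).
    by apply/HSe; exists k.
  split => // [[_ [_ [_ H]]]]; apply: Hn; do 3 (split => //).
have [_ Hn] : whole (f a) /\ ~ idem mulQ (whole (T:=Q)) (f a).
  apply/HTe; exists (k - n) => //; by rewrite ltn_subLR // leqNgt hkn.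
split => // [[_ [_ [_ H]]]]; apply: Hn; do 3 (split => //); exact: hf.
Qed.
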